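(* The action of $O_d(\mathbb C)$ on $U_d(\mathbb C)\subset V$ is free.
   Context: Fix $d\ge2$. $V=\mathbb C^d\oplus\mathfrak{so}(d,\mathbb C)$, elements $(v,M)$ with $v=(c_1,\dots,c_d)^\top$, $M$ complex skew-symmetric, $M_{ij}=c_{ij}=-M_{ji}$ for $i<j$; $O_d(\mathbb C)=\{A\in\mathbb C^{d\times d}:AA^\top=I\}$ acts by $A\cdot(v,M)=(Av,AMA^\top)$. $L^{(1)}=\{c_1=\dots=c_{d-1}=0\}$, and for $2\le i\le d-1$, $L^{(i)}=\{(v,M)\in L^{(i-1)}:c_{k(d-i+2)}=0,\ 1\le k\le d-i\}$. Let $f_1=c_1^2+\dots+c_d^2$; for $2\le i\le d-1$ let $f_i$ be the $O_d(\mathbb C)$-invariant rational function on $V$ with $f_i|_{L^{(i-1)}}=c_{1(d-i+2)}^2+\dots+c_{(d-i+1)(d-i+2)}^2$; let $f_d$ be the invariant rational function with $f_d|_{L^{(d-1)}}=c_{12}^2$ (these exist and are uniquely determined). $U_d(\mathbb C)$ is the set of points in the domain of every $f_k$ with $\prod_kf_k\neq0$. An action is free if all stabilizers are trivial. *)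

(* Defs.v *)
From mathcomp Require Import all_boot all_algebra.
From mathcomp Require Import Rstruct complex.
Set Implicit Arguments. Unset Strict Implicit. Unset Printing Implicit Defensive.
Import GRing.Theory Num.Theory.
Local Open Scope ring_scope.

Definition Cx : numClosedFieldType := (Rdefinitions.R)[i].

(** Ambient space C^d x M_d(C); V = C^d (+) so(d,C) is the subset where the
    matrix component is skew-symmetric. *)
Definition Vt (d : nat) : Type := ('cV[Cx]_d * 'M[Cx]_d)%type.

Definition inV (d : nat) (x : Vt d) : Prop := (x.2)^T = - x.2.

Definition inO (d : nat) (A : 'M[Cx]_d) : Prop := A *m A^T = 1%:M.

Definition act (d : nat) (A : 'M[Cx]_d) (x : Vt d) : Vt d :=
  (A *m x.1, A *m x.2 *m A^T).

(** Coordinates with the paper's 1-based indexing: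
    cvec x k = c_k (k-th entry of v), cmat x k l = c_{kl} = M_{kl}. *)
Definition cvec (d : nat) (x : Vt d) (k : nat) : Cx :=
  match @insub nat (fun n => n < d)%N 'I_d k.-1 with
  | Some a => x.1 a ord0 | None => 0 end.

Definition cmat (d : nat) (x : Vt d) (k l : nat) : Cx :=
  match @insub nat (fun n => n < d)%N 'I_d k.-1,
        @insub nat (fun n => n < d)%N 'I_d l.-1 with
  | Some a, Some b => x.2 a b | _, _ => 0 end.

(** Polynomial functions on the ambient space (generated by constants and
    coordinate functions under + and * ); restricted to V these are exactly
    the polynomial functions on V. *)
Inductive polyfun (d : nat) : (Vt d -> Cx) -> Prop :=
| pf_const (c : Cx) : polyfun (fun _ => c)
| pf_vcoord (a : 'I_d) : polyfun (fun x => x.1 a ord0)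
| pf_mcoord (a b : 'I_d) : polyfun (fun x => x.2 a b)
| pf_add p q : polyfun p -> polyfun q -> polyfun (fun x => p x + q x)
| pf_mul p q : polyfun p -> polyfun q -> polyfun (fun x => p x * q x).

(** A rational function on V, given by a representative num/den with
    den not identically zero on V. *)
Record ratfun (d : nat) := RatFun {
  num : Vt d -> Cx;
  den : Vt d -> Cx;
  num_poly : polyfun num;
  den_poly : polyfun den;
  den_nz : exists x, inV x /\ den x != 0 }.

Definition rf_eq (d : nat) (f g : ratfun d) : Prop :=
  forall x, inV x -> num f x * den g x = num g x * den f x.

Definition rf_value_at (d : nat) (f : ratfun d) (x : Vt d) (v : Cx) : Prop :=
  inV x /\ exists g : ratfun d,
    rf_eq f g /\ den g x != 0 /\ v = num g x / den g x.

Definition rf_invariant (d : nat) (f : ratfun d) : Prop :=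
  forall A : 'M[Cx]_d, inO A ->
  forall x, inV x -> num f (act A x) * den f x = num f x * den f (act A x).

(** The restriction of f to the subset L of V (a linear subspace) is the
    polynomial function h: some representative of f has denominator not
    identically zero on L, and num = h * den on L. *)
Definition rf_restricts_to (d : nat) (f : ratfun d) (L : Vt d -> Prop)
  (h : Vt d -> Cx) : Prop :=
  exists g : ratfun d, rf_eq f g /\ (exists x, L x /\ den g x != 0) /\
    forall x, L x -> num g x = h x * den g x.

(** The slices L^{(i)}, 1 <= i <= d-1 (L^{(0)} := V, unused). *)
Fixpoint Lslice (d : nat) (i : nat) (x : Vt d) : Prop :=
  match i with
  | 0 => inV x
  | 1 => inV x /\ forall k, (1 <= k <= d - 1)%N -> cvec x k = 0
  | S i' => Lslice i' x /\
            forall k, (1 <= k <= d - i)%N -> cmat x k (d - i + 2) = 0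
  end.

Definition f1_poly (d : nat) (x : Vt d) : Cx :=
  \sum_(1 <= k < d.+1) cvec x k ^+ 2.

Definition fi_target (d i : nat) (x : Vt d) : Cx :=
  \sum_(1 <= k < (d - i + 1).+1) cmat x k (d - i + 2) ^+ 2.

Definition fd_target (d : nat) (x : Vt d) : Cx := cmat x 1 2 ^+ 2.

Definition is_f_family (d : nat) (f : nat -> ratfun d) : Prop :=
  (forall x, inV x -> num (f 1%N) x = f1_poly x * den (f 1%N) x) /\
  (forall k, (1 <= k <= d)%N -> rf_invariant (f k)) /\
  (forall i, (2 <= i <= d - 1)%N ->
     rf_restricts_to (f i) (@Lslice d i.-1) (@fi_target d i)) /\
  rf_restricts_to (f d) (@Lslice d d.-1) (@fd_target d).

Definition in_U (d : nat) (f : nat -> ratfun d) (x : Vt d) : Prop :=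
  inV x /\ exists vals : nat -> Cx,
    (forall k, (1 <= k <= d)%N -> rf_value_at (f k) x (vals k)) /\
    \prod_(1 <= k < d.+1) vals k != 0.

(* Main.v *)
Require Import Defs.
From mathcomp Require Import all_boot all_algebra.
From mathcomp Require Import Rstruct complex.
From mathcomp Require Import ring zify.
Import GRing.Theory Num.Theory.
Local Open Scope ring_scope.

Set Implicit Arguments. Unset Strict Implicit. Unset Printing Implicit Defensive.

Section Dens.
Variable d : nat.

Definition line (y y0 : Vt d) (t : Cx) : Vt d :=
  (y.1 + t *: (y0.1 - y.1), y.2 + t *: (y0.2 - y.2)).

Definition lpoly (F : Vt d -> Cx) :=
  forall y y0 : Vt d, exists p : {poly Cx}, forall t, F (line y y0 t) = p.[t].

Lemma line0 y y0 : line y y0 0 = y.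
Proof. by case: y => a b; rewrite /line /= !scale0r !addr0. Qed.

Lemma line1 y y0 : line y y0 1 = y0.
Proof. case: y0 => a b; rewrite /line /= !scale1r; congr pair; by rewrite addrC subrK. Qed.

Lemma all_roots_eq0 (p : {poly Cx}) : (forall t, p.[t] = 0) -> p = 0.
Proof.
move=> h; apply: (@roots_geq_poly_eq0 _ p [seq i%:R | i <- iota 0 (size p)]).
- by apply/allP => x /mapP [i _ ->]; apply/rootP.
- rewrite map_inj_uniq ?iota_uniq // => i j /eqP; rewrite eqr_nat => /eqP //.
- by rewrite size_map size_iota.
Qed.

Lemma density (S : Vt d -> Prop) (P Q : Vt d -> Cx) :
  (forall y y0 t, S y -> S y0 -> S (line y y0 t)) -> lpoly P -> lpoly Q ->
  (exists y0, S y0 /\ Q y0 != 0) -> (forall y, S y -> Q y * P y = 0) ->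
  forall y, S y -> P y = 0.
Proof.
move=> Sl lP lQ [y0 [Sy0 Qy0]] h y Sy.
have [p Hp] := lP y y0; have [q Hq] := lQ y y0.
have e : q * p = 0.
  apply: all_roots_eq0 => t; rewrite hornerM -Hp -Hq; exact: h (Sl _ _ _ Sy Sy0).
have qn : q != 0.
  apply/eqP => q0; move: Qy0; by rewrite -(line1 y y0) Hq q0 horner0 eqxx.
move/eqP: e; rewrite mulf_eq0 (negbTE qn) /= => /eqP p0.
by rewrite -(line0 y y0) Hp p0 horner0.
Qed.

Lemma nonzero_prod (S : Vt d -> Prop) (Q1 Q2 : Vt d -> Cx) :
  (forall y y0 t, S y -> S y0 -> S (line y y0 t)) -> lpoly Q1 -> lpoly Q2 ->
  (exists y1, S y1 /\ Q1 y1 != 0) -> (exists y2, S y2 /\ Q2 y2 != 0) ->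
  exists y, S y /\ Q1 y * Q2 y != 0.
Proof.
move=> Sl l1 l2 [y1 [S1 n1]] [y2 [S2 n2]].
have [p Hp] := l1 y1 y2; have [q Hq] := l2 y1 y2.
have pn : p != 0 by apply/eqP => p0; move: n1; rewrite -(line0 y1 y2) Hp p0 horner0 eqxx.
have qn : q != 0 by apply/eqP => q0; move: n2; rewrite -(line1 y1 y2) Hq q0 horner0 eqxx.
have pq : p * q != 0 by rewrite mulf_neq0.
case: (boolP (has (fun i : nat => (p * q).[i%:R] != 0) (iota 0 (size (p * q))))).
  case/hasP => i _ hi; exists (line y1 y2 i%:R); split; first exact: Sl.
  by rewrite Hp Hq -hornerM.
move=> hn; case/negP: pq; apply/eqP.
apply: (@roots_geq_poly_eq0 _ (p * q) [seq i%:R | i <- iota 0 (size (p * q))]).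
- apply/allP => x /mapP [i hi ->]; apply/rootP; apply/eqP.
  by move/hasPn: hn => /(_ i hi) /negPn.
- rewrite map_inj_uniq ?iota_uniq // => i j /eqP; rewrite eqr_nat => /eqP //.
- by rewrite size_map size_iota.
Qed.
End Dens.

Section Lp.
Variable d : nat.
Implicit Types (F G : Vt d -> Cx).

Lemma lpoly_const c : lpoly (fun _ : Vt d => c).
Proof. by move=> y y0; exists c%:P => t; rewrite hornerC. Qed.

Lemma lpoly_add F G : lpoly F -> lpoly G -> lpoly (fun y => F y + G y).
Proof.
move=> hF hG y y0; have [p Hp] := hF y y0; have [q Hq] := hG y y0.
by exists (p + q) => t; rewrite hornerD Hp Hq.
Qed.

Lemma lpoly_mul F G : lpoly F -> lpoly G -> lpoly (fun y => F y * G y).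
Proof.
move=> hF hG y y0; have [p Hp] := hF y y0; have [q Hq] := hG y y0.
by exists (p * q) => t; rewrite hornerM Hp Hq.
Qed.

Lemma lpoly_opp F : lpoly F -> lpoly (fun y => - F y).
Proof.
move=> hF y y0; have [p Hp] := hF y y0.
by exists (- p) => t; rewrite hornerN Hp.
Qed.

Lemma lpoly_sub F G : lpoly F -> lpoly G -> lpoly (fun y => F y - G y).
Proof. by move=> hF hG; apply: lpoly_add => //; apply: lpoly_opp. Qed.



Lemma lpoly_ext F G : (forall y, F y = G y) -> lpoly F -> lpoly G.
Proof. move=> e hF y y0; have [p Hp] := hF y y0; exists p => t; by rewrite -e. Qed.

Lemma lpoly_exp F k : lpoly F -> lpoly (fun y => F y ^+ k).
Proof.
move=> hF; elim: k => [|k IH]; first by apply: lpoly_const.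
apply: (lpoly_ext (F := fun y => F y * F y ^+ k)); first by move=> y; rewrite exprS.
exact: lpoly_mul.
Qed.

Lemma lpoly_sum (I : Type) (r : seq I) (P : pred I) (Fs : I -> Vt d -> Cx) :
  (forall i, lpoly (Fs i)) -> lpoly (fun y => \sum_(i <- r | P i) Fs i y).
Proof.
move=> h; elim: r => [|i r IH].
  by apply: (lpoly_ext (F := fun _ => 0)); [move=> y; rewrite big_nil | apply: lpoly_const].
apply: (lpoly_ext (F := fun y => (if P i then Fs i y else 0) + \sum_(j <- r | P j) Fs j y)).
  by move=> y; rewrite big_cons; case: (P i); rewrite ?add0r.
apply: lpoly_add => //; case: (P i) => //; exact: lpoly_const.
Qed.

Lemma lpoly_prod (I : Type) (r : seq I) (P : pred I) (Fs : I -> Vt d -> Cx) :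
  (forall i, lpoly (Fs i)) -> lpoly (fun y => \prod_(i <- r | P i) Fs i y).
Proof.
move=> h; elim: r => [|i r IH].
  by apply: (lpoly_ext (F := fun _ => 1)); [move=> y; rewrite big_nil | apply: lpoly_const].
apply: (lpoly_ext (F := fun y => (if P i then Fs i y else 1) * \prod_(j <- r | P j) Fs j y)).
  by move=> y; rewrite big_cons; case: (P i); rewrite ?mul1r.
apply: lpoly_mul => //; case: (P i) => //; exact: lpoly_const.
Qed.

Lemma lpoly_vc (a : 'I_d) : lpoly (fun y => y.1 a ord0).
Proof.
move=> y y0; exists ((y.1 a ord0)%:P + 'X * (y0.1 a ord0 - y.1 a ord0)%:P) => t.
by rewrite hornerD hornerC hornerM hornerX hornerC /line /= !mxE mulrC.
Qed.

Lemma lpoly_mc (a b : 'I_d) : lpoly (fun y => y.2 a b).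
Proof.
move=> y y0; exists ((y.2 a b)%:P + 'X * (y0.2 a b - y.2 a b)%:P) => t.
by rewrite hornerD hornerC hornerM hornerX hornerC /line /= !mxE mulrC.
Qed.

Lemma lpoly_polyfun F : polyfun F -> lpoly F.
Proof.
elim=> [c|a|a b|p q _ hp _ hq|p q _ hp _ hq].
- exact: lpoly_const.
- exact: lpoly_vc.
- exact: lpoly_mc.
- exact: lpoly_add.
- exact: lpoly_mul.
Qed.

Lemma act_line (A : 'M[Cx]_d) y y0 t :
  act A (line y y0 t) = line (act A y) (act A y0) t.
Proof.
rewrite /act /line /=; congr pair.
  by rewrite mulmxDr -scalemxAr mulmxBr.
by rewrite mulmxDr -scalemxAr mulmxBr mulmxDl -scalemxAl mulmxBl.
Qed.

Lemma lpoly_act (A : 'M[Cx]_d) F : lpoly F -> lpoly (fun y => F (act A y)).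
Proof.
move=> hF y y0; have [p Hp] := hF (act A y) (act A y0).
by exists p => t; rewrite act_line.
Qed.

Definition lpolyM m n (F : Vt d -> 'M[Cx]_(m, n)) := forall i j, lpoly (fun y => F y i j).

Lemma lpolyM_mul m n p (F : Vt d -> 'M[Cx]_(m, n)) (G : Vt d -> 'M[Cx]_(n, p)) :
  lpolyM F -> lpolyM G -> lpolyM (fun y => F y *m G y).
Proof.
move=> hF hG i j.
apply: (lpoly_ext (F := fun y => \sum_(k <- index_enum 'I_n) F y i k * G y k j)).
  by move=> y; rewrite mxE.
by apply: lpoly_sum => k; apply: lpoly_mul.
Qed.

Lemma lpolyM_tr m n (F : Vt d -> 'M[Cx]_(m, n)) : lpolyM F -> lpolyM (fun y => (F y)^T).
Proof. move=> hF i j; apply: (lpoly_ext (F := fun y => F y j i)) => // y; by rewrite mxE. Qed.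

Lemma lpolyM_exp (F : Vt d -> 'M[Cx]_d) k : lpolyM F -> lpolyM (fun y => F y ^+ k).
Proof.
move=> hF; elim: k => [|k IH] i j.
  apply: (lpoly_ext (F := fun _ => (1%:M : 'M[Cx]_d) i j)) => //.
  exact: lpoly_const.
apply: (lpoly_ext (F := fun y => (F y *m F y ^+ k) i j)).
  by move=> y; rewrite exprS mulmxE.
exact: lpolyM_mul.
Qed.

Lemma lpoly_det n (F : Vt d -> 'M[Cx]_n) : lpolyM F -> lpoly (fun y => \det (F y)).
Proof.
move=> hF; rewrite /determinant.
apply: lpoly_sum => s; apply: lpoly_mul; first exact: lpoly_const.
by apply: lpoly_prod => i.
Qed.

Lemma lpolyM_v : lpolyM (fun y : Vt d => y.1).
Proof. by move=> i j; rewrite (ord1 j); apply: lpoly_vc. Qed.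

Lemma lpolyM_m : lpolyM (fun y : Vt d => y.2).
Proof. by move=> i j; apply: lpoly_mc. Qed.

End Lp.

Section Kry.
Variable d : nat.
Implicit Types (y z : Vt d) (A B : 'M[Cx]_d).

Lemma inO_trl A : inO A -> A^T *m A = 1%:M.
Proof. by move=> h; apply: mulmx1C. Qed.

Lemma inO_mul A B : inO A -> inO B -> inO (A *m B).
Proof.
move=> hA hB; rewrite /inO trmx_mul mulmxA -(mulmxA A) hB mulmx1 hA //.
Qed.

Lemma inO_tr A : inO A -> inO A^T.
Proof. by move=> h; rewrite /inO trmxK inO_trl. Qed.

Lemma inO1 : inO (1%:M : 'M[Cx]_d).
Proof. by rewrite /inO trmx1 mulmx1. Qed.

Lemma act_mul A B y : act (A *m B) y = act A (act B y).
Proof. by rewrite /act /= trmx_mul !mulmxA. Qed.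

Lemma act1 y : act 1%:M y = y.
Proof. by case: y => a b; rewrite /act /= trmx1 mul1mx mulmx1 mul1mx. Qed.

Lemma act_trK A y : inO A -> act A^T (act A y) = y.
Proof. by move=> h; rewrite -act_mul inO_trl // act1. Qed.

Lemma act_Ktr A y : inO A -> act A (act A^T y) = y.
Proof. by move=> h; rewrite -act_mul h act1. Qed.

Lemma act_inV A y : inV y -> inV (act A y).
Proof.
rewrite /inV /act /= => h.
by rewrite !trmx_mul trmxK h mulNmx mulmxN mulmxA.
Qed.

Lemma inV_line y y0 t : inV y -> inV y0 -> inV (line y y0 t).
Proof.
rewrite /inV /line /= => h h0.
have e1 i j : y.2 j i = - y.2 i j by move/matrixP: h => /(_ i j); rewrite !mxE.
have e2 i j : y0.2 j i = - y0.2 i j by move/matrixP: h0 => /(_ i j); rewrite !mxE.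
apply/matrixP => i j; rewrite !mxE e1 e2; ring.
Qed.

Definition kv (m : nat) y : 'cV[Cx]_d := y.2 ^+ m *m y.1.
Definition Kr (j : nat) y : 'M[Cx]_(d, j) := \matrix_(r, m) kv m y r ord0.
Definition Gm (j : nat) y : Cx := \det ((Kr j y)^T *m Kr j y).

Lemma conj_exp A y m : inO A -> (A *m y.2 *m A^T) ^+ m = A *m y.2 ^+ m *m A^T.
Proof.
move=> h; elim: m => [|m IH]; first by rewrite !expr0 mulmx1 h.
rewrite !exprS IH -!mulmxE !mulmxA; congr (_ *m _).
by rewrite -!mulmxA (mulmxA A^T) inO_trl // mul1mx.
Qed.

Lemma kv_act A y m : inO A -> kv m (act A y) = A *m kv m y.
Proof.
move=> h; rewrite /kv /act /= conj_exp // !mulmxA -(mulmxA _ A^T) inO_trl //.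
by rewrite mulmx1.
Qed.

Lemma Kr_act A y j : inO A -> Kr j (act A y) = A *m Kr j y.
Proof.
move=> h; apply/matrixP => r m; rewrite /Kr mxE (kv_act _ _ h) !mxE.
by apply: eq_bigr => k _; rewrite !mxE.
Qed.

Lemma Gm_act A y j : inO A -> Gm j (act A y) = Gm j y.
Proof.
move=> h; rewrite /Gm Kr_act // trmx_mul mulmxA -(mulmxA _ A^T) inO_trl //.
by rewrite mulmx1.
Qed.

Lemma lpoly_kv m (r : 'I_d) : lpoly (fun y => kv m y r ord0).
Proof. by apply: lpolyM_mul; [apply: lpolyM_exp; apply: lpolyM_m | apply: lpolyM_v]. Qed.

Lemma KrE j y r m : Kr j y r m = kv m y r ord0.
Proof. by rewrite /Kr mxE. Qed.

Lemma lpoly_Kr j : lpolyM (Kr j).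
Proof.
move=> r m; apply: (lpoly_ext (F := fun y => kv m y r ord0)); last exact: lpoly_kv.
by move=> y; rewrite KrE.
Qed.

Lemma lpoly_Gm j : lpoly (Gm j).
Proof.
apply: lpoly_det; apply: lpolyM_mul; first apply: lpolyM_tr; exact: lpoly_Kr.
Qed.

Lemma Gm0 y : Gm 0 y = 1.
Proof. by rewrite /Gm det_mx00. Qed.

Lemma Gm1 y : Gm 1 y = \sum_(r < d) y.1 r ord0 ^+ 2.
Proof.
rewrite /Gm det_mx11 !mxE; apply: eq_bigr => r _.
by rewrite mxE !KrE /kv expr0 mul1mx expr2.
Qed.

Lemma free_of_Gm A x : inO A -> act A x = x -> Gm d x != 0 -> A = 1%:M.
Proof.
move=> hA hx hG.
have hK : A *m Kr d x = Kr d x by rewrite -Kr_act // hx.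
have hu : Kr d x \in unitmx.
  rewrite unitmxE unitfE; move: hG; rewrite /Gm det_mulmx det_tr.
  by apply: contra => /eqP ->; rewrite mul0r.
by rewrite -(mulmxK hu A) hK mulmxV.
Qed.

End Kry.

Section Sl.
Variable d : nat.
Implicit Types (y z : Vt d) (A B : 'M[Cx]_d).

Lemma insub_ord (r : 'I_d) : @insub nat (fun n => (n < d)%N) 'I_d r = Some r.
Proof.
case: insubP => [u _ hu|]; last by rewrite ltn_ord.
by rewrite (_ : u = r) //; apply: val_inj.
Qed.

Lemma insub_none k : (d <= k)%N -> @insub nat (fun n => (n < d)%N) 'I_d k = None.
Proof. by move=> h; rewrite insubF // ltnNge h. Qed.

Lemma cvecE y (r : 'I_d) : cvec y r.+1 = y.1 r ord0.
Proof. by rewrite /cvec /= insub_ord. Qed.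

Lemma cmatE y (a b : 'I_d) : cmat y a.+1 b.+1 = y.2 a b.
Proof. by rewrite /cmat /= !insub_ord. Qed.

Definition Lz (i : nat) y :=
  [/\ inV y, (0 < i)%N -> forall r : 'I_d, (r < d.-1)%N -> y.1 r ord0 = 0 &
      forall r j : 'I_d, (d - i < j)%N -> (r.+1 < j)%N -> y.2 r j = 0].

Lemma Lz_succ i y : (0 < i)%N -> (i.+1 < d)%N ->
  (Lz i.+1 y <-> Lz i y /\ forall r j : 'I_d, (j : nat) = (d - i)%N -> (r.+1 < j)%N -> y.2 r j = 0).
Proof.
move=> i0 id; split.
- case=> h1 h2 h3; split.
    split => //; first by move=> _; apply: h2.
    by move=> r j hj; apply: h3; lia.
  by move=> r j hj; apply: h3; lia.
- case=> [[h1 h2 h3] h4]; split => // [_|r j hj]; first exact: h2.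
  case: (ltnP (d - i) j) => hj'; first exact: h3.
  apply: h4; lia.
Qed.

Lemma Lslice_Lz i y : (i < d)%N -> (Lslice i y <-> Lz i y).
Proof.
elim: i => [|[|i] IH] hi.
- split; first by move=> h; split => // r j; move: (ltn_ord j); lia.
  by case.
- split.
  + case=> h1 h2; split => // [_ r hr|r j]; last by move: (ltn_ord j); lia.
    rewrite -cvecE h2 //; lia.
  + case=> h1 h2 _; split => // k /andP [k1 kd].
    have kd' : (k.-1 < d)%N by lia.
    rewrite -(prednK k1) (cvecE y (Ordinal kd')) h2 //=; lia.
- have hi' : (i.+1 < d)%N by lia.
  rewrite Lz_succ // -IH //=; split.
  + case=> h1 h2; split => // r j hj hr.
    have -> : y.2 r j = cmat y r.+1 (d - i.+2 + 2).
      by rewrite -cmatE; congr cmat; lia.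
    apply: h2; lia.
  + case=> h1 h2; split => // k /andP [k1 kd].
    have kd' : (k.-1 < d)%N by lia.
    have jd : (d - i.+2 + 1 < d)%N by lia.
    rewrite -(prednK k1) (_ : (d - i.+2 + 2 = (Ordinal jd).+1)%N) ?cmatE; last by rewrite /=; lia.
    rewrite (_ : k.-1.+1 = (Ordinal kd').+1) // cmatE; apply: h2; rewrite /=; lia.
Qed.

Definition tgtc (j : 'I_d) y := \sum_(r < d | (r < j)%N) y.2 r j ^+ 2.

Lemma f1_Gm y : f1_poly y = Gm 1 y.
Proof.
rewrite Gm1 /f1_poly big_add1 /= big_mkord; apply: eq_bigr => r _.
by rewrite cvecE.
Qed.

Lemma fi_tgtc i (j : 'I_d) y : (2 <= i)%N -> (i <= d)%N -> (j : nat) = (d - i + 1)%N ->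
  fi_target i y = tgtc j y.
Proof.
move=> i2 id hj; rewrite /fi_target /tgtc big_add1 /= big_mkord.
rewrite (big_ord_widen d (fun k => cmat y k.+1 (d - i + 2) ^+ 2)); last by lia.
apply: eq_big => [r|r _]; first by rewrite hj.
congr (_ ^+ 2).
by rewrite (_ : (d - i + 2 = j.+1)%N) ?cmatE //; lia.
Qed.

Lemma fd_fi y : fd_target y = fi_target d y.
Proof. by rewrite /fd_target /fi_target subnn add0n big_nat1. Qed.

Lemma Lz_line i y y0 t : Lz i y -> Lz i y0 -> Lz i (line y y0 t).
Proof.
case=> h1 h2 h3 [h1' h2' h3']; split; first exact: inV_line.
  by move=> hi r hr; rewrite /line /= !mxE h2 // h2' // subrr mulr0 addr0.
by move=> r j hj hr; rewrite /line /= !mxE h3 // h3' // subrr mulr0 addr0.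
Qed.

End Sl.

Section HH.
Variable d : nat.
Implicit Types (y z : Vt d) (A B H : 'M[Cx]_d).

Lemma sum_delta (a : 'I_d) (F : 'I_d -> Cx) : \sum_k (a == k)%:R * F k = F a.
Proof.
rewrite (bigD1 a) //= eqxx mul1r big1 ?addr0 // => k hk.
by rewrite eq_sym (negbTE hk) mul0r.
Qed.

Lemma sum_delta_r (a : 'I_d) (F : 'I_d -> Cx) : \sum_k F k * (k == a)%:R = F a.
Proof.
rewrite -(sum_delta a F); apply: eq_bigr => k _; by rewrite mulrC eq_sym.
Qed.

Definition blk (n : nat) H := forall a b : 'I_d, (n <= a)%N || (n <= b)%N -> H a b = (a == b)%:R.

Lemma blk1 n : blk n 1%:M.
Proof. by move=> a b _; rewrite mxE. Qed.

Lemma blk_le n m H : (n <= m)%N -> blk n H -> blk m H.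
Proof. by move=> nm h a b hab; apply: h; case/orP: hab => h'; apply/orP; [left|right]; lia. Qed.

Lemma blk_tr n H : blk n H -> blk n H^T.
Proof. move=> h a b hab; rewrite mxE h; [by rewrite eq_sym | by rewrite orbC]. Qed.

Lemma blk_mulcol n H m (X : 'M[Cx]_(d, m)) (r : 'I_d) j :
  blk n H -> (forall k : 'I_d, (k < n)%N -> X k j = 0) -> (H *m X) r j = X r j.
Proof.
move=> hH hX; rewrite mxE -(sum_delta r (fun k => X k j)); apply: eq_bigr => k _.
case: (ltnP k n) => hk; first by rewrite hX // !mulr0.
by rewrite hH // hk orbT.
Qed.

Lemma blk_mulrow n H m (X : 'M[Cx]_(m, d)) r (j : 'I_d) :
  blk n H -> (n <= j)%N -> (X *m H^T) r j = X r j.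
Proof.
move=> hH hj; rewrite mxE -(sum_delta_r j (fun k => X r k)); apply: eq_bigr => k _.
by rewrite mxE hH ?hj ?orbT // eq_sym.
Qed.

Lemma blk_mul n H B : blk n H -> blk n B -> blk n (H *m B).
Proof.
move=> hH hB a b hab; case/orP: hab => h.
- have -> : (H *m B) a b = (1%:M *m B) a b.
    rewrite !mxE; apply: eq_bigr => k _; by rewrite mxE hH ?h.
  by rewrite mul1mx hB ?h.
- rewrite (blk_mulcol (n := n)) //; first by rewrite hB // h orbT.
  move=> k hk; rewrite hB; last by rewrite h orbT.
  by case: eqP => // e; move: hk; rewrite e; lia.
Qed.

Lemma householder (n : nat) (u : 'I_d -> Cx) (p : 'I_d) :
  (p : nat) = n.-1 -> (0 < n)%N ->
  (forall r : 'I_d, (n <= r)%N -> u r = 0) -> \sum_r u r ^+ 2 != 0 ->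
  exists H s, [/\ inO H, blk n H, s ^+ 2 = \sum_r u r ^+ 2 &
    forall a, \sum_k H a k * u k = s * (a == p)%:R].
Proof.
move=> hp hn hu hq.
set q := \sum_r u r ^+ 2 in hq *.
set s0 := sqrtC q.
have s0q : s0 ^+ 2 = q by rewrite sqrtCK.
have s0n : s0 != 0 by apply: contra hq => /eqP e; rewrite -s0q e expr0n.
pose s := if u p == s0 then - s0 else s0.
have sq : s ^+ 2 = q by rewrite /s; case: ifP; rewrite ?sqrrN.
have sup : s - u p != 0.
  rewrite /s; case E: (u p == s0).
    by move/eqP: E => ->; rewrite -opprD oppr_eq0 -mulr2n mulrn_eq0.
  by rewrite subr_eq0 eq_sym E.
pose w k := u k - s * (k == p)%:R.
have dw X : \sum_k w k * X k = \sum_k u k * X k - s * X p.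
  rewrite -(sum_delta_r p X) mulr_sumr -sumrB; apply: eq_bigr => k _; rewrite /w; ring.
set dwu := \sum_k w k * u k.
have hdwu : dwu = s * (s - u p).
  rewrite /dwu dw (_ : \sum_k u k * u k = q); last by apply: eq_bigr => k _; rewrite expr2.
  by rewrite -sq; ring.
have dwun : dwu != 0 by rewrite hdwu mulf_neq0 // ; apply: contra s0n => /eqP e; rewrite -[s0]opprK; move: e; rewrite /s; case: ifP => _ ->; rewrite ?oppr0.
set dww := \sum_k w k * w k.
have hdww : dww = 2 * dwu.
  rewrite /dww dw.
  have -> : \sum_k u k * w k = dwu by apply: eq_bigr => k _; rewrite mulrC.
  rewrite hdwu /w eqxx mulr1; ring.
have dwwn : dww != 0 by rewrite hdww mulf_neq0 // pnatr_eq0.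
pose c := 2 / dww.
pose H := \matrix_(a, b) ((a == b)%:R - c * w a * w b) : 'M[Cx]_d.
have HE a b : H a b = (a == b)%:R - c * w a * w b by rewrite mxE.
have HX X a : \sum_k H a k * X k = X a - c * w a * \sum_k w k * X k.
  rewrite -(sum_delta a X) mulr_sumr -sumrB; apply: eq_bigr => k _; rewrite HE; ring.
have wz (a : 'I_d) : (n <= a)%N -> w a = 0.
  move=> ha; rewrite /w hu //; case: eqP => [e|]; last by rewrite mulr0 subr0.
  by move: ha; rewrite e hp; lia.
have cdwu : c * dwu = 1 by rewrite /c hdww; field; rewrite dwun.
exists H, s; split => //.
- apply/matrixP => a b; rewrite mxE.
  have -> : \sum_k H a k * H^T k b = \sum_k H a k * H b k.
    by apply: eq_bigr => k _; rewrite !mxE.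
  rewrite HX.
  have -> : \sum_k w k * H b k = \sum_k H b k * w k by apply: eq_bigr => k _; rewrite mulrC.
  rewrite HX !HE mxE -/dww.
  have cd : c * dww = 2 by rewrite /c divfK.
  rewrite (_ : c * w a * (w b - c * w b * dww) = c * w a * w b - c * w a * w b * (c * dww)); last by ring.
  rewrite cd eq_sym; ring.
- move=> a b hab; rewrite HE; case/orP: hab => h; first by rewrite wz // mulr0 mul0r subr0.
  by rewrite (wz b) // mulr0 subr0.
- move=> a; rewrite HX -/dwu -mulrA [w a * _]mulrC mulrA cdwu mul1r /w; ring.
Qed.

End HH.

Section St.
Variable d : nat.
Implicit Types (y z : Vt d) (A B H : 'M[Cx]_d).

Definition tgt1 z := \sum_(r < d) z.1 r ord0 ^+ 2.

Lemma step1 z : (0 < d)%N -> inV z -> tgt1 z != 0 ->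
  exists H, [/\ inO H, blk d H & Lz 1 (act H z)].
Proof.
move=> d0 hz ht.
have pd : (d.-1 < d)%N by lia.
have hu0 : forall r : 'I_d, (d <= r)%N -> z.1 r ord0 = 0 by move=> r hr; move: (ltn_ord r); lia.
have [H [s [hO hb _ hu]]] := householder (p := Ordinal pd) erefl d0 hu0 ht.
exists H; split => //; split; first exact: act_inV.
  move=> _ r hr; rewrite /act /= mxE hu; case: eqP => [e|]; last by rewrite mulr0.
  by move: hr; rewrite e /=; lia.
by move=> r j hj; move: (ltn_ord j); lia.
Qed.

Lemma stepj (jn : 'I_d) z : (0 < jn)%N -> Lz (d - jn) z -> tgtc jn z != 0 ->
  exists H, [/\ inO H, blk jn H & Lz (d - jn).+1 (act H z)].
Proof.
move=> j0 [hV hv hM] ht.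
have pd : (jn.-1 < d)%N by move: (ltn_ord jn); lia.
pose u (r : 'I_d) := if (r < jn)%N then z.2 r jn else 0.
have hq : \sum_r u r ^+ 2 = tgtc jn z.
  rewrite /tgtc [RHS]big_mkcond; apply: eq_bigr => r _; rewrite /u; case: ifP => //; by rewrite expr0n.
have hu0 : forall r : 'I_d, (jn <= r)%N -> u r = 0.
  by move=> r hr; rewrite /u ifF //; apply/negbTE; rewrite -leqNgt.
have ht' : \sum_r u r ^+ 2 != 0 by rewrite hq.
have [H [s [hO hb _ hu]]] := householder (p := Ordinal pd) erefl j0 hu0 ht'.
have jd : (jn < d)%N := ltn_ord jn.
exists H; split => //; split; first exact: act_inV.
  move=> _ r hr; rewrite /act /= (blk_mulcol (n := jn)) //; first by apply: hv => //; lia.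
  by move=> k hk; apply: hv; lia.
move=> r j hj hr; rewrite /act /= (blk_mulrow (n := jn)) //; last by lia.
case: (ltngtP jn j) => hjn; last 1 first.
- have -> : j = jn by apply: val_inj.
  pose W := \col_k (if (k < jn)%N then 0 else z.2 k jn) : 'cV[Cx]_d.
  have e : (H *m z.2) r jn = \sum_k H r k * u k + (H *m W) r ord0.
    rewrite !mxE -big_split /=; apply: eq_bigr => k _; rewrite mxE /u; case: ifP => _; ring.
  rewrite e hu (blk_mulcol (n := jn)) //; last by move=> k hk; rewrite mxE hk.
  rewrite mxE ifT; last by lia.
  case: eqP => [er|]; last by rewrite mulr0 addr0.
  by move: hr; rewrite er /=; lia.
- rewrite (blk_mulcol (n := jn)) //; first by apply: hM => //; lia.
  by move=> k hk; apply: hM; lia.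
- by move: hj; lia.
Qed.

Lemma Lz_mono i i' z : (i' <= i)%N -> Lz i z -> Lz i' z.
Proof.
move=> hi [h1 h2 h3]; split => //; first by move=> hi' r hr; apply: h2 => //; lia.
by move=> r j hj; apply: h3; lia.
Qed.

Lemma sumsq_orth H (w : 'cV[Cx]_d) : inO H ->
  \sum_r (H *m w) r ord0 ^+ 2 = \sum_r w r ord0 ^+ 2.
Proof.
move=> hO.
have e : (H *m w)^T *m (H *m w) = w^T *m w.
  by rewrite trmx_mul mulmxA -(mulmxA _ H^T) inO_trl // mulmx1.
move/matrixP: e => /(_ ord0 ord0); rewrite !mxE => e.
rewrite (eq_bigr (fun r => (H *m w)^T ord0 r * (H *m w) r ord0)); last first. move=> r _. by rewrite [in RHS]mxE expr2.
by rewrite e; apply: eq_bigr => r _; rewrite mxE expr2.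
Qed.

Lemma tgtc_blk n H (j : 'I_d) z : inO H -> blk n H -> (n <= j)%N ->
  tgtc j (act H z) = tgtc j z.
Proof.
move=> hO hb hj.
pose w := col j z.2.
have e1 r : (act H z).2 r j = (H *m w) r ord0.
  rewrite /act /= (blk_mulrow (n := n)) // !mxE; apply: eq_bigr => k _; by rewrite mxE.
have e2 (r : 'I_d) : (j <= r)%N -> (H *m w) r ord0 = w r ord0.
  move=> hr; rewrite mxE -(sum_delta r (fun k => w k ord0)); apply: eq_bigr => k _.
  by rewrite hb //; apply/orP; left; lia.
have split (F : 'I_d -> Cx) : \sum_(r < d | (r < j)%N) F r = \sum_r F r - \sum_(r < d | ~~ (r < j)%N) F r.
  by rewrite [in RHS](bigID (fun r : 'I_d => (r < j)%N)) /= addrK.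
rewrite /tgtc (eq_bigr (fun r => (H *m w) r ord0 ^+ 2)); last by move=> r _; rewrite e1.
rewrite split sumsq_orth //.
rewrite (eq_bigr (fun r => w r ord0 ^+ 2) (P := fun r : 'I_d => ~~ (r < j)%N)); last first.
  by move=> r; rewrite -leqNgt => hr; rewrite e2.
rewrite -split; apply: eq_bigr => r _; by rewrite mxE.
Qed.

End St.

Section Ex.
Variable n : nat.
Local Notation d := n.+2.
Implicit Types (y z : Vt d) (A B H : 'M[Cx]_d).

Lemma Lz_top z : Lz d.-1 z ->
  (forall r : 'I_d, (r < d.-1)%N -> z.1 r ord0 = 0) /\
  (forall r j : 'I_d, (r.+1 < j)%N -> z.2 r j = 0).
Proof.
case=> _ hv hM; split; first by apply: hv.
by move=> r j hr; apply: hM => //; lia.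
Qed.

Lemma kv_S m z : kv m.+1 z = z.2 *m kv m z.
Proof. by rewrite /kv exprS -mulmxE mulmxA. Qed.

Lemma kv_zero z m (r : 'I_d) : Lz d.-1 z -> (r + m < d.-1)%N -> kv m z r ord0 = 0.
Proof.
move=> /Lz_top [hv hM]; elim: m r => [|m IH] r hr.
  by rewrite /kv expr0 mul1mx; apply: hv; lia.
rewrite kv_S mxE big1 // => c _.
case: (ltnP (c + m) d.-1) => hc; first by rewrite IH // mulr0.
by rewrite hM ?mul0r //; lia.
Qed.

Lemma kv_step z m (r r' : 'I_d) : Lz d.-1 z -> (r' : nat) = r.+1 -> (r + m.+1)%N = d.-1 ->
  kv m.+1 z r ord0 = z.2 r r' * kv m z r' ord0.
Proof.
move=> hz hr' hrm; have [hv hM] := Lz_top hz.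
rewrite kv_S mxE (bigD1 r') //= big1 ?addr0 // => c hc.
case: (ltnP (c + m) d.-1) => h; first by rewrite kv_zero // mulr0.
rewrite hM ?mul0r //.
have : (c : nat) != r' by apply: contra hc => /eqP e; apply/eqP; apply: val_inj.
lia.
Qed.

Definition gi (s : nat) : 'I_d := inord (d.-1 - s).
Definition diag s z := kv s z (gi s) ord0.

Lemma giE s : (gi s : nat) = (d.-1 - s)%N.
Proof. by rewrite /gi inordK //; lia. Qed.

Lemma diag_step z s : Lz d.-1 z -> (s < d.-1)%N ->
  diag s.+1 z = z.2 (gi s.+1) (gi s) * diag s z.
Proof.
move=> hz hs; rewrite /diag (kv_step (r' := gi s)) // !giE; lia.
Qed.

Lemma sum_delta_gen (I : finType) (i0 : I) (F : I -> Cx) : \sum_i (i == i0)%:R * F i = F i0.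
Proof.
rewrite (bigD1 i0) //= eqxx mul1r big1 ?addr0 // => k hk.
by rewrite (negbTE hk) mul0r.
Qed.

Lemma Gm_top z j : Lz d.-1 z -> (j <= d)%N -> Gm j z = (\prod_(s < j) diag s z) ^+ 2.
Proof.
move=> hz hj.
pose K := Kr j z.
pose T := \matrix_(s < j, m < j) K (gi s) m.
pose P := \matrix_(r < d, s < j) ((r == gi s)%:R : Cx).
have giinj (s s' : 'I_j) : (gi s == gi s') = (s == s').
  apply/eqP/eqP => [e|->] //; apply: val_inj.
  have := congr1 (fun x : 'I_d => x : nat) e; rewrite /= !giE.
  move: (ltn_ord s) (ltn_ord s') hj; lia.
have hK : K = P *m T.
  apply/matrixP => r m; rewrite [in RHS]mxE.
  case: (ltnP r (d - j)) => hr.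
    rewrite big1; last by move=> s _; rewrite mxE; case: eqP => [e|]; [move: hr; rewrite e giE; move: (ltn_ord s); lia | rewrite mul0r].
    rewrite /K KrE kv_zero //; move: (ltn_ord m); lia.
  have s0j : (d.-1 - r < j)%N by move: (ltn_ord r); lia.
  have gs0 : gi (Ordinal s0j) = r by apply: val_inj => /=; rewrite giE /=; move: (ltn_ord r); lia.
  rewrite (eq_bigr (fun s => (s == Ordinal s0j)%:R * T s m)); last first.
    by move=> s _; rewrite mxE -giinj gs0 eq_sym.
  rewrite sum_delta_gen [T _ _]mxE gs0 /K ?KrE //.
have hP : P^T *m P = 1%:M.
  apply/matrixP => s s'; rewrite !mxE.
  rewrite (eq_bigr (fun r => (r == gi s)%:R * (gi s' == r)%:R)); last first.
    by move=> r _; rewrite !mxE (eq_sym (gi s')).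
  by rewrite sum_delta_gen giinj eq_sym.
have hT : is_trig_mx T^T.
  apply/is_trig_mxP => a b hab; rewrite [T^T a b]mxE [T b a]mxE /K KrE kv_zero // giE.
  move: (ltn_ord b); lia.
rewrite /Gm -/K hK trmx_mul -mulmxA (mulmxA P^T) hP mul1mx det_mulmx det_tr.
rewrite -(det_tr T) det_trig // expr2; congr (_ * _); apply: eq_bigr => s _;
  by rewrite [T^T s s]mxE [T s s]mxE /K KrE.
Qed.

Lemma tgtc_top z (jn jp : 'I_d) : Lz d.-1 z -> (jp.+1 = jn)%N ->
  tgtc jn z = z.2 jp jn ^+ 2.
Proof.
move=> hz hj; have [_ hM] := Lz_top hz.
rewrite /tgtc (bigD1 jp) /=; last by lia.
rewrite big1 ?addr0 // => r /andP [hr hne].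
rewrite hM ?expr0n //.
have : (r : nat) != jp by apply: contra hne => /eqP e; apply/eqP; apply: val_inj.
lia.
Qed.

Lemma S_top z k : Lz d.-1 z -> (2 <= k <= d)%N ->
  tgtc (inord (d - k + 1)) z * Gm k.-1 z ^+ 2 = Gm k z * Gm k.-2 z.
Proof.
move=> hz; case: k => [|[|k]] //= hk.
have hk' : (k.+2 <= d)%N by lia.
rewrite !Gm_top //; try lia.
rewrite !big_ord_recr /=.
have e1 : (inord (d - k.+2 + 1) : 'I_d) = gi k by apply: val_inj => /=; rewrite giE inordK; lia.
rewrite e1 (tgtc_top (jp := gi k.+1)) //; last by rewrite !giE; lia.
rewrite diag_step //.
set P := \prod_(i < k) diag i z.
ring.
Qed.

Definition z0 : Vt d :=
  (\col_r ((r == gi 0)%:R),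
   \matrix_(a, b) (if a.+1 == b then 1 else if b.+1 == a then -1 else 0)).

Lemma z0_top : Lz d.-1 z0.
Proof.
split.
- apply/matrixP => a b; rewrite !mxE.
  case: (eqVneq a.+1 b) => h1; case: (eqVneq b.+1 a) => h2 //=.
  + by move: h1 h2 => /eqP h1 /eqP h2; lia.
  + by rewrite opprK.
  + by rewrite oppr0.
- move=> _ r hr; rewrite mxE; case: eqP => // e.
  by move: hr; rewrite e giE; lia.
- move=> r j _ hr; rewrite mxE.
  case: (eqVneq r.+1 (j : nat)) => h1; first by move: hr; rewrite h1 ltnn.
  case: (eqVneq j.+1 (r : nat)) => h2 //; by move: hr; rewrite -h2; lia.
Qed.

Lemma diag_z0 s : (s < d)%N -> diag s z0 = 1.
Proof.
elim: s => [|s IH] hs.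
  by rewrite /diag /kv expr0 mul1mx mxE eqxx.
rewrite diag_step; [|exact: z0_top|lia].
rewrite IH; last by lia.
rewrite mxE ifT ?mulr1 //; apply/eqP; rewrite !giE; lia.
Qed.

Lemma Gm_z0 j : (j <= d)%N -> Gm j z0 = 1.
Proof.
move=> hj; rewrite (Gm_top z0_top hj) big1 ?expr1n // => s _.
apply: diag_z0; move: (ltn_ord s); lia.
Qed.

Lemma tgtc_z0 (jn : 'I_d) : (0 < jn)%N -> tgtc jn z0 = 1.
Proof.
move=> hj; have jp : (jn.-1 < d)%N by move: (ltn_ord jn); lia.
rewrite (tgtc_top (jp := Ordinal jp) z0_top); last by rewrite /=; lia.
rewrite mxE ifT ?expr1n //; apply/eqP; rewrite /=; lia.
Qed.

End Ex.

Section Ch.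
Variable n : nat.
Local Notation d := n.+2.
Implicit Types (y z : Vt d) (A B H : 'M[Cx]_d).

Definition SK k := forall z : Vt d, Lz k.-1 z ->
  tgtc (inord (d - k + 1)) z * Gm k.-1 z ^+ 2 = Gm k z * Gm k.-2 z.

Definition Gnz z := forall j, (j < d)%N -> Gm j z != 0.

Lemma Gnz_act A z : inO A -> Gnz z -> Gnz (act A z).
Proof. by move=> hA h j hj; rewrite Gm_act //; apply: h. Qed.

Lemma transport m : forall i, (i + m = d.-1)%N ->
  (forall k, (i < k)%N -> (k < d)%N -> (2 <= k)%N -> SK k) ->
  forall z, Lz i z -> Gnz z -> exists A, [/\ inO A, blk (d - i) A & Lz d.-1 (act A z)].
Proof.
elim: m => [|m IH] i hi hS z hz hG.
  exists 1%:M; split; [exact: inO1 | exact: blk1 | by rewrite act1; rewrite addn0 in hi; rewrite -hi].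
case: i hi hS hz => [|i] hi hS hz.
- have ht : tgt1 z != 0 by rewrite /tgt1 -Gm1; apply: hG.
  have [H [hH hbH hz1]] := step1 (ltn0Sn _) (let: And3 h _ _ := hz in h) ht.
  have [A [hA hbA hz2]] := IH 1%N ltac:(lia) (fun k h1 h2 h3 => hS k ltac:(lia) h2 h3) _ hz1 (Gnz_act hH hG).
  exists (A *m H); split; first exact: inO_mul.
    by apply: blk_mul => //; apply: (blk_le (n := (d - 1)%N)) => //; lia.
  by rewrite act_mul.
- have hk := hS i.+2 ltac:(lia) ltac:(lia) ltac:(lia) z hz.
  have jd : (d - i.+1 < d)%N by lia.
  set jn : 'I_d := Ordinal jd.
  have ejn : (inord (d - i.+2 + 1) : 'I_d) = jn by apply: val_inj => /=; rewrite inordK; lia.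
  rewrite ejn /= in hk.
  have ht : tgtc jn z != 0.
    apply/eqP => e; move: hk; rewrite e mul0r => /esym /eqP; rewrite mulf_eq0.
    by rewrite (negbTE (hG _ _)) ?(negbTE (hG i _)) //; lia.
  have hz' : Lz (d - jn) z by rewrite (_ : (d - jn = i.+1)%N) //= ; lia.
  have [H [hH hbH hz1]] := stepj (jn := jn) ltac:(rewrite /=; lia) hz' ht.
  rewrite (_ : ((d - jn).+1 = i.+2)%N) /= in hz1; last by lia.
  have [A [hA hbA hz2]] := IH i.+2 ltac:(lia) (fun k h1 h2 h3 => hS k ltac:(lia) h2 h3) _ hz1 (Gnz_act hH hG).
  exists (A *m H); split; first exact: inO_mul.
    apply: blk_mul; first by apply: (blk_le (n := (d - i.+2)%N)) => //; lia.
    by rewrite (_ : (d - i.+1 = jn)%N).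
  by rewrite act_mul.
Qed.

Lemma prod_Gnz z : \prod_(j < d) Gm j z != 0 -> Gnz z.
Proof.
move=> h j hj; apply: contra h => /eqP e.
by rewrite (bigD1 (Ordinal hj)) //= e mul0r.
Qed.

Lemma lpoly_tgtc (j : 'I_d) : lpoly (tgtc j).
Proof. by apply: lpoly_sum => r; apply: lpoly_exp; apply: lpoly_mc. Qed.

Lemma lpoly_Q (j : 'I_d) : lpoly (fun z => tgtc j z * \prod_(i < d) Gm i z).
Proof. by apply: lpoly_mul; [apply: lpoly_tgtc | apply: lpoly_prod => i; apply: lpoly_Gm]. Qed.

Lemma SK_step k : (2 <= k)%N -> (k < d)%N ->
  (forall k', (k < k')%N -> (k' < d)%N -> SK k') -> SK k.
Proof.
move=> k2 kd hS z hz.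
set jn : 'I_d := inord (d - k + 1).
have ejn : (jn : nat) = (d - k + 1)%N by rewrite /jn inordK; lia.
apply/eqP; rewrite -subr_eq0; apply/eqP; move: z hz.
apply: (density (S := Lz k.-1) (Q := fun z => tgtc jn z * \prod_(i < d) Gm i z)).
- by move=> y y0 t; apply: Lz_line.
- apply: lpoly_sub; first by apply: lpoly_mul; [apply: lpoly_tgtc | apply: lpoly_exp; apply: lpoly_Gm].
  by apply: lpoly_mul; apply: lpoly_Gm.
- exact: lpoly_Q.
- exists (z0 n); split; first by apply: (Lz_mono (i := d.-1)) => //; [lia | apply: z0_top].
  rewrite mulf_neq0 //; first by rewrite tgtc_z0 ?oner_neq0 // ejn; lia.
  rewrite prodf_seq_neq0; apply/allP => j _; apply/implyP => _.
  by rewrite Gm_z0 ?oner_neq0 //; move: (ltn_ord j); lia.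
move=> y hy; case: (eqVneq (tgtc jn y * \prod_(i < d) Gm i y) 0) => hQ; first by rewrite hQ mul0r.
apply/eqP; rewrite mulf_eq0 (negbTE hQ) /= subr_eq0; apply/eqP.
move: hQ; rewrite mulf_eq0 negb_or => /andP [ht hp].
have hG := prod_Gnz hp.
have hy' : Lz (d - jn) y by rewrite ejn (_ : (d - (d - k + 1) = k.-1)%N) //; lia.
have [H [hH hbH hy1]] := stepj (jn := jn) ltac:(rewrite ejn; lia) hy' ht.
rewrite (_ : ((d - jn).+1 = k)%N) in hy1; last by rewrite ejn; lia.
have [A [hA hbA hy2]] := transport (m := (d.-1 - k)%N) (i := k) ltac:(lia)
   (fun k' h1 h2 h3 => hS k' h1 h2) hy1 (Gnz_act hH hG).
have := S_top hy2 (k := k) ltac:(lia).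
rewrite -/jn (tgtc_blk (n := (d - k)%N)) //; last by rewrite ejn; lia.
rewrite (tgtc_blk (n := jn)) // !Gm_act //.
Qed.

Lemma S_all k : (2 <= k <= d)%N -> SK k.
Proof.
suff h : forall m k, (d - k <= m)%N -> (2 <= k <= d)%N -> SK k.
  by move=> hk; apply: (h (d - k)%N).
elim=> [|m IH] k' hm hk.
  have -> : k' = d by lia.
  by move=> z hz; apply: S_top => //; lia.
case: (leqP (d - k') m) => h; first exact: IH.
apply: SK_step; try lia.
by move=> k'' h1 h2; apply: IH; lia.
Qed.

End Ch.

Section Fin.
Variable n : nat.
Local Notation d := n.+2.
Implicit Types (y z : Vt d) (A B H : 'M[Cx]_d).

Lemma inV_line_cl : forall (y y0 : Vt d) t, inV y -> inV y0 -> inV (line y y0 t).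
Proof. by move=> y y0 t; apply: inV_line. Qed.

Lemma rf_transfer (p q : ratfun d) (R S : Vt d -> Cx) : lpoly R -> lpoly S -> rf_eq p q ->
  (forall y, inV y -> num q y * R y = den q y * S y) ->
  forall y, inV y -> num p y * R y = den p y * S y.
Proof.
move=> lR lS hpq hq y hy; apply/eqP; rewrite -subr_eq0; apply/eqP; move: y hy.
apply: (density (S := @inV d) (Q := den q)).
- exact: inV_line_cl.
- apply: lpoly_sub; apply: lpoly_mul => //; apply: lpoly_polyfun; [exact: num_poly | exact: den_poly].
- apply: lpoly_polyfun; exact: den_poly.
- exact: den_nz.
move=> y hy.
have e1 := hpq y hy; have e2 := hq y hy.
move: e1 e2; set a := num p y; set b := den p y; set c := num q y; set e := den q y.
move=> E1 E2.
rewrite (_ : e * (a * R y - b * S y) = (a * e) * R y - b * e * S y); last by ring.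
rewrite E1 (_ : c * b * R y - b * e * S y = b * (c * R y - e * S y)); last by ring.
by rewrite E2 subrr mulr0.
Qed.

Lemma lpoly_num (p : ratfun d) : lpoly (num p).
Proof. apply: lpoly_polyfun; exact: num_poly. Qed.
Lemma lpoly_den (p : ratfun d) : lpoly (den p).
Proof. apply: lpoly_polyfun; exact: den_poly. Qed.

Lemma rf_inv_transfer (f g : ratfun d) : rf_eq f g -> rf_invariant f ->
  forall B, inO B -> forall y, inV y ->
  num g (act B y) * den g y = num g y * den g (act B y).
Proof.
move=> hfg hf B hB y hy; apply/eqP; rewrite -subr_eq0; apply/eqP; move: y hy.
apply: (density (S := @inV d) (Q := fun y => den f (act B y) * den f y)).
- exact: inV_line_cl.
- apply: lpoly_sub; apply: lpoly_mul; try apply: lpoly_act; try apply: lpoly_num; apply: lpoly_den.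
- apply: lpoly_mul; [apply: lpoly_act; apply: lpoly_den | apply: lpoly_den].
- have [y0 [hy0 hn0]] := den_nz f.
  apply: (nonzero_prod (S := @inV d)); first exact: inV_line_cl.
  + apply: lpoly_act; apply: lpoly_den.
  + apply: lpoly_den.
  + exists (act B^T y0); split; first exact: act_inV.
    by rewrite act_Ktr.
  + by exists y0.
move=> y hy.
have hBy := act_inV B hy.
have e1 := hfg y hy; have e2 := hfg _ hBy; have e3 := hf B hB y hy.
move: e1 e2 e3.
set a0 := num f y; set a1 := num f (act B y); set b0 := den f y; set b1 := den f (act B y).
set c0 := num g y; set c1 := num g (act B y); set f0 := den g y; set f1 := den g (act B y).
move=> E1 E2 E3.
rewrite (_ : b1 * b0 * (c1 * f0 - c0 * f1) = b0 * f0 * (c1 * b1) - b1 * f1 * (c0 * b0)); last by ring.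
rewrite -E1 -E2.
rewrite (_ : b0 * f0 * (a1 * f1) - b1 * f1 * (a0 * f0) = f0 * f1 * (a1 * b0 - a0 * b1)); last by ring.
by rewrite E3 subrr mulr0.
Qed.

Lemma Lz0 y : inV y -> Lz 0 y.
Proof. by move=> h; split => // r j; move: (ltn_ord j); lia. Qed.

Lemma transport_V y : inV y -> Gnz y -> exists B, inO B /\ Lz d.-1 (act B y).
Proof.
move=> hy hG.
have hS : forall k, (0 < k)%N -> (k < d)%N -> (2 <= k)%N -> SK n k.
  by move=> k h1 h2 h3; apply: S_all; lia.
have [B [hB _ hz]] := transport (m := d.-1) (i := 0) erefl hS (Lz0 hy) hG.
by exists B.
Qed.

Lemma fk_identity (f : ratfun d) k : (2 <= k <= d)%N -> rf_invariant f ->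
  rf_restricts_to f (Lslice k.-1) (fi_target k) ->
  forall y, inV y -> num f y * Gm k.-1 y ^+ 2 = den f y * (Gm k y * Gm k.-2 y).
Proof.
move=> hk hf [g [hfg [[x0 [hx0 he0]] hres]]].
set jn : 'I_d := inord (d - k + 1).
have ejn : (jn : nat) = (d - k + 1)%N by rewrite /jn inordK; lia.
have hkd : (k.-1 < d)%N by lia.
have ginv := rf_inv_transfer hfg hf.
pose Phi y := num g y * Gm k.-1 y ^+ 2 - den g y * (Gm k y * Gm k.-2 y).
have lPhi : lpoly Phi.
  apply: lpoly_sub; apply: lpoly_mul; try apply: lpoly_num; try apply: lpoly_den;
  try apply: lpoly_exp; try apply: lpoly_mul; apply: lpoly_Gm.
have b2 z : Lz k.-1 z -> Phi z = 0.
  move=> hz; have hs : Lslice k.-1 z by apply/Lslice_Lz.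
  have hV : inV z by case: hz.
  rewrite /Phi hres // (fi_tgtc (j := jn)) //; try lia.
  rewrite -(S_all (k := k) hk hz) -/jn; ring.
have hx0' : Lz k.-1 x0 by apply/Lslice_Lz.
have b3 B z : inO B -> Lz k.-1 z -> Phi (act B z) = 0.
  move=> hB; move: z; apply: (density (S := Lz k.-1) (Q := den g)).
  - by move=> y y0 t; apply: Lz_line.
  - exact: lpoly_act.
  - exact: lpoly_den.
  - by exists x0.
  move=> z hz; have hV : inV z by case: hz.
  have e := ginv B hB z hV.
  transitivity (den g (act B z) * Phi z); last by rewrite b2 // mulr0.
  rewrite /Phi !Gm_act //; move: e.
  set c1 := num g (act B z); set c0 := num g z; set e1 := den g (act B z); set e0 := den g z.
  move=> e.
  rewrite (_ : e0 * (c1 * Gm k.-1 z ^+ 2 - e1 * (Gm k z * Gm k.-2 z)) =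
     (c1 * e0) * Gm k.-1 z ^+ 2 - e0 * e1 * (Gm k z * Gm k.-2 z)); last by ring.
  rewrite e; ring.
have b4 y : inV y -> Phi y = 0.
  move: y; apply: (density (S := @inV d) (Q := fun y => \prod_(j < d) Gm j y)).
  - exact: inV_line_cl.
  - exact: lPhi.
  - by apply: lpoly_prod => j; apply: lpoly_Gm.
  - exists (z0 n); split; first by case: (z0_top n).
    rewrite prodf_seq_neq0; apply/allP => j _; apply/implyP => _.
    by rewrite Gm_z0 ?oner_neq0 //; move: (ltn_ord j); lia.
  move=> y hy; case: (eqVneq (\prod_(j < d) Gm j y) 0) => hQ; first by rewrite hQ mul0r.
  have [B [hB hz]] := transport_V hy (prod_Gnz hQ).
  rewrite -(act_trK y hB) b3 ?mulr0 //; first exact: inO_tr.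
  by apply: (Lz_mono (i := d.-1)) => //; lia.
apply: (rf_transfer (q := g)) => //.
- by apply: lpoly_exp; apply: lpoly_Gm.
- by apply: lpoly_mul; apply: lpoly_Gm.
- by move=> y hy; apply/eqP; rewrite -subr_eq0; apply/eqP; apply: b4.
Qed.

Lemma value_identity (p : ratfun d) v x (R S : Vt d -> Cx) : lpoly R -> lpoly S ->
  rf_value_at p x v -> (forall y, inV y -> num p y * R y = den p y * S y) -> v * R x = S x.
Proof.
move=> lR lS [hx [g [hpg [hne ->]]]] hid.
have hgp : rf_eq g p by move=> y hy; rewrite (hpg y hy).
have := rf_transfer lR lS hgp hid hx.
move=> e; rewrite mulrAC e mulrAC mulfV ?mul1r //.
Qed.

Lemma restricts_ext (p : ratfun d) L (h h' : Vt d -> Cx) : (forall y, h y = h' y) ->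
  rf_restricts_to p L h -> rf_restricts_to p L h'.
Proof.
move=> e [g [hpg [hx hres]]]; exists g; split => //; split => // y hy.
by rewrite -e; apply: hres.
Qed.

Lemma main_n (f : nat -> ratfun d) : is_f_family f ->
  forall x : Vt d, in_U f x -> forall A : 'M[Cx]_d, inO A -> act A x = x -> A = 1%:M.
Proof.
case=> h1 [hinv [hmid hlast]] x [hxV [vals [hvals hprod]]] A hA hAx.
have hid k : (2 <= k <= d)%N -> forall y, inV y ->
    num (f k) y * Gm k.-1 y ^+ 2 = den (f k) y * (Gm k y * Gm k.-2 y).
  move=> hk; apply: fk_identity => //; first by apply: hinv; lia.
  case: (eqVneq k d) => [->|hne].
    by apply: (restricts_ext _ hlast) => y; rewrite fd_fi.
  by apply: hmid; lia.
have hid1 y : inV y -> num (f 1%N) y * 1 = den (f 1%N) y * Gm 1 y.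
  by move=> hy; rewrite mulr1 h1 // f1_Gm mulrC.
have vnz k : (1 <= k <= d)%N -> vals k != 0.
  move=> hk; move: hprod; rewrite prodf_seq_neq0 => /allP /(_ k).
  by rewrite mem_index_iota ltnS hk => /(_ isT).
have v1 : vals 1%N * 1 = Gm 1 x.
  by apply: (value_identity (p := f 1%N)) => //; [apply: lpoly_const | apply: lpoly_Gm | apply: hvals].
have vk k : (2 <= k <= d)%N -> vals k * Gm k.-1 x ^+ 2 = Gm k x * Gm k.-2 x.
  move=> hk; apply: (value_identity (p := f k) (R := fun y => Gm k.-1 y ^+ 2) (S := fun y => Gm k y * Gm k.-2 y)); last exact: hid hk.
  - by apply: lpoly_exp; apply: lpoly_Gm.
  - by apply: lpoly_mul; apply: lpoly_Gm.
  - by apply: hvals; lia.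
have chain : forall j, (j.+1 <= d)%N -> Gm j x != 0 /\ Gm j.+1 x != 0.
  elim=> [|j IH] hj.
    by rewrite Gm0 oner_neq0 -v1 mulr1; split => //; apply: vnz.
  have [g0 g1] := IH ltac:(lia); split => //.
  have := vk j.+2 ltac:(lia) => /= e.
  have : vals j.+2 * Gm j.+1 x ^+ 2 != 0 by rewrite mulf_neq0 ?expf_neq0 // vnz //; lia.
  by rewrite e mulf_eq0 negb_or => /andP [].
have [_ hGd] := chain d.-1 ltac:(lia).
exact: free_of_Gm hA hAx hGd.
Qed.

End Fin.

Theorem main_all (d : nat) (hd : (2 <= d)%N) (f : nat -> ratfun d) :
  is_f_family f ->
  forall x : Vt d, in_U f x ->
  forall A : 'M[Cx]_d, inO A -> act A x = x -> A = 1%:M.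
Proof.
move: f; case: d hd => [|[|n]] // _ f.
exact: main_n.
Qed.


Unset Implicit Arguments.

Theorem corollary3p9 (d : nat) (hd : (2 <= d)%N) (f : nat -> ratfun d) :
  is_f_family f ->
  forall x : Vt d, in_U f x ->
  forall A : 'M[Cx]_d, inO A -> act A x = x -> A = 1%:M.
Proof. exact: (main_all hd). Qed.
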